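(* Let $l,n$ be positive integers, $\mathbf{x}_1,\dots,\mathbf{x}_l\in\mathbb{R}^n$, $y_1,\dots,y_l\in\mathbb{R}$, $a_1,\dots,a_l,b_1,\dots,b_l\in\mathbb{R}$, and let $\alpha<\beta$ be real numbers. Let $\mathbf Z\in\mathbb{R}^{l\times n}$ have $i$-th row $a_i\mathbf x_i^T$ and $\bar{\mathbf y}=(b_1y_1,\dots,b_ly_l)^T$. For $C>0$ let $\theta^*(C)$ denote an optimal solution of $$\min_{\theta\in[\alpha,\beta]^l}\ \tfrac{C}{2}\|\mathbf Z^T\theta\|^2-\langle\bar{\mathbf y},\theta\rangle.$$ Then for any $C>C_0>0$ and any such optimal solutions $\theta^*(C)$, $\theta^*(C_0)$, $$\Big\|\mathbf Z^T\theta^*(C)-\tfrac{C_0+C}{2C}\mathbf Z^T\theta^*(C_0)\Big\|\le\tfrac{C-C_0}{2C}\|\mathbf Z^T\theta^*(C_0)\|.$$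
   Context: In the paper this is the dual of the problem $\min_{\mathbf w}\frac12\|\mathbf w\|^2+C\sum_{i}\varphi(\mathbf w^T(a_i\mathbf x_i)+b_iy_i)$, where $\varphi:\mathbb{R}\to[0,\infty)$ is nonconstant, continuous and sublinear, and $[\alpha,\beta]$ is the interval on which the conjugate $\varphi^*$ vanishes ($\varphi^*=+\infty$ outside it). $\|\cdot\|$ is the Euclidean norm. *)

(* Defs.v *)
From mathcomp Require Import all_boot all_order all_algebra.
From mathcomp Require Import reals.
Set Implicit Arguments. Unset Strict Implicit. Unset Printing Implicit Defensive.
Import Order.TTheory GRing.Theory Num.Theory.
Local Open Scope ring_scope.

Definition enorm (R : realType) (n : nat) (v : 'cV[R]_n) : R :=
  Num.sqrt (\sum_(i < n) v i 0 ^+ 2).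

Definition inner (R : realType) (n : nat) (u v : 'cV[R]_n) : R :=
  \sum_(i < n) u i 0 * v i 0.

Definition Zmat (R : realType) (l n : nat) (a : 'I_l -> R) (x : 'I_l -> 'cV[R]_n)
  : 'M[R]_(l, n) := \matrix_(i < l, j < n) (a i * x i j 0).

Definition ybar (R : realType) (l : nat) (b y : 'I_l -> R) : 'cV[R]_l :=
  \col_(i < l) (b i * y i).

Definition in_box (R : realType) (l : nat) (alpha beta : R) (t : 'cV[R]_l) : Prop :=
  forall i, alpha <= t i 0 <= beta.

Definition dual_obj (R : realType) (l n : nat) (Z : 'M[R]_(l, n)) (yb : 'cV[R]_l)
  (C : R) (t : 'cV[R]_l) : R :=
  C / 2 * enorm (Z^T *m t) ^+ 2 - inner yb t.

Definition is_dual_opt (R : realType) (l n : nat) (Z : 'M[R]_(l, n)) (yb : 'cV[R]_l)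
  (alpha beta C : R) (t : 'cV[R]_l) : Prop :=
  in_box alpha beta t /\
  forall t', in_box alpha beta t' -> dual_obj Z yb C t <= dual_obj Z yb C t'.

(* Main.v *)
Require Import Defs.
From mathcomp Require Import all_boot all_order all_algebra.
From mathcomp Require Import reals.
From mathcomp Require Import ring lra.
Import Order.TTheory GRing.Theory Num.Theory.
Local Open Scope ring_scope.

Section Aux.
Variable R : realType.

Lemma innerDl n (u v w : 'cV[R]_n) : inner (u + v) w = inner u w + inner v w.
Proof. by rewrite /inner -big_split; apply: eq_bigr => i _; rewrite !mxE mulrDl. Qed.

Lemma innerZl n s (u w : 'cV[R]_n) : inner (s *: u) w = s * inner u w.
Proof. by rewrite /inner mulr_sumr; apply: eq_bigr => i _; rewrite !mxE mulrA. Qed.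

Lemma innerNl n (u w : 'cV[R]_n) : inner (- u) w = - inner u w.
Proof. by rewrite -scaleN1r innerZl mulN1r. Qed.

Lemma innerC n (u w : 'cV[R]_n) : inner u w = inner w u.
Proof. by apply: eq_bigr => i _; rewrite mulrC. Qed.

Lemma innerDr n (u v w : 'cV[R]_n) : inner w (u + v) = inner w u + inner w v.
Proof. by rewrite innerC innerDl !(innerC _ w). Qed.

Lemma innerZr n s (u w : 'cV[R]_n) : inner w (s *: u) = s * inner w u.
Proof. by rewrite innerC innerZl innerC. Qed.

Lemma innerNr n (u w : 'cV[R]_n) : inner w (- u) = - inner w u.
Proof. by rewrite innerC innerNl innerC. Qed.

Lemma inner_ge0 n (u : 'cV[R]_n) : 0 <= inner u u.
Proof. by apply: sumr_ge0 => i _; rewrite -expr2 sqr_ge0. Qed.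

Lemma enorm2 n (u : 'cV[R]_n) : enorm u ^+ 2 = inner u u.
Proof.
rewrite /enorm sqr_sqrtr; last by apply: sumr_ge0 => i _; rewrite sqr_ge0.
by apply: eq_bigr => i _; rewrite expr2.
Qed.

Lemma enormE n (u : 'cV[R]_n) : enorm u = Num.sqrt (inner u u).
Proof. by rewrite -enorm2 sqrtr_sqr ger0_norm // sqrtr_ge0. Qed.

Lemma key (g K : R) : 0 <= K ->
  (forall s, 0 < s -> s <= 1 -> 0 <= s * g + s ^+ 2 * K) -> 0 <= g.
Proof.
move=> K0 H; case: (lerP 0 g) => // g0.
have pos : 0 < K - g by lra.
have := H (- g / (K - g)).
have s0 : 0 < - g / (K - g) by apply: divr_gt0; lra.
have s1 : - g / (K - g) <= 1 by rewrite ler_pdivrMr //; lra.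
move=> /(_ s0 s1).
have -> : - g / (K - g) * g + (- g / (K - g)) ^+ 2 * K
          = - g / (K - g) * (g * (K - g) - g * K) / (K - g).
  by field; rewrite lt0r_neq0.
have : 0 < - g / (K - g) * (g * g) / (K - g).
  by apply: divr_gt0 => //; apply: mulr_gt0 => //; nra.
have -> : g * (K - g) - g * K = - (g * g) by ring.
rewrite mulrN mulNr; lra.
Qed.

Lemma grad l n (Z : 'M[R]_(l, n)) yb alpha beta C t t' : 0 <= C ->
  is_dual_opt Z yb alpha beta C t -> in_box alpha beta t' ->
  0 <= C * inner (Z^T *m t) (Z^T *m (t' - t)) - inner yb (t' - t).
Proof.
move=> C0 [bt opt] bt'.
set u := Z^T *m t; set d := t' - t; set w := Z^T *m d.
apply: (@key _ (C / 2 * inner w w)).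
  by apply: mulr_ge0; [apply: divr_ge0 | apply: inner_ge0].
move=> s s0 s1.
have bs : in_box alpha beta (t + s *: d).
  move=> i; rewrite !mxE; have := bt i; have := bt' i.
  move=> /andP[a1 b1] /andP[a2 b2]; apply/andP; split; nra.
have h := opt _ bs; rewrite /dual_obj in h.
rewrite mulmxDr -scalemxAr -/u -/w !enorm2 in h.
rewrite !innerDl !innerDr !innerZl !innerZr (innerC _ w u) in h.
set A := inner u u in h *; set B := inner u w in h *.
set D := inner w w in h *; set E := inner yb t in h *; set F := inner yb d in h *.
have : 0 <= C / 2 * (A + s * B + s * (B + s * D)) - (E + s * F) - (C / 2 * A - E).
  lra.
have -> : C / 2 * (A + s * B + s * (B + s * D)) - (E + s * F) - (C / 2 * A - E)
   = s * (C * B - F) + s ^+ 2 * (C / 2 * D) by field.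
done.
Qed.

End Aux.

Theorem theorem2 (R : realType) (l n : nat) (hl : (0 < l)%N) (hn : (0 < n)%N)
  (x : 'I_l -> 'cV[R]_n) (y a b : 'I_l -> R) (alpha beta : R)
  (hab : alpha < beta) (C C0 : R) (hC0 : 0 < C0) (hC : C0 < C)
  (t t0 : 'cV[R]_l) :
  is_dual_opt (Zmat a x) (ybar b y) alpha beta C t ->
  is_dual_opt (Zmat a x) (ybar b y) alpha beta C0 t0 ->
  enorm ((Zmat a x)^T *m t - ((C0 + C) / (2 * C)) *: ((Zmat a x)^T *m t0))
    <= (C - C0) / (2 * C) * enorm ((Zmat a x)^T *m t0).
Proof.
move=> o o0.
have g1 := @grad _ _ _ _ _ _ _ _ _ _ (ltW (lt_trans hC0 hC)) o o0.1.
have g2 := @grad _ _ _ _ _ _ _ _ _ _ (ltW hC0) o0 o.1.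
move: g1 g2; rewrite !mulmxBr.
set u := _ *m t; set u0 := _ *m t0.
rewrite !innerDr !innerNr !(innerC _ _ u0 u).
set p := inner u u; set q := inner u u0; set r := inner u0 u0.
set e := inner _ t0; set f := inner _ t.
move=> g1 g2.
have H : C * p - (C + C0) * q + C0 * r <= 0 by lra.
have Cp : 0 < C by lra.
set k := (C0 + C) / (2 * C); set m := (C - C0) / (2 * C).
have m0 : 0 <= m by rewrite /m; apply: divr_ge0; lra.
rewrite !enormE -(ger0_norm m0) -sqrtr_sqr -sqrtrM ?sqr_ge0 //.
rewrite ler_sqrt; last by apply: mulr_ge0; [apply: sqr_ge0|apply: inner_ge0].
rewrite !innerDl !innerDr !innerNl !innerNr !innerZl !innerZr (innerC _ _ u0 u) -/p -/q -/r.
rewrite -subr_le0.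
have -> : p - k * q + (- (k * q) - - (k * (k * r))) - m ^+ 2 * r
   = (C * p - (C + C0) * q + C0 * r) / C.
  by rewrite /k /m; field; rewrite lt0r_neq0.
by rewrite pmulr_lle0 ?invr_gt0.
Qed.
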